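(* For every $w\in S_n$, the map $\Psi$ is a bijection from the set of chains from $w$ to $w_0$ compatible with $(n-1,\dots,1)$ to $\mathrm{FT}(w)$.
   Context: Permutations in one-line notation, $w_0=[n,\dots,1]$, $wt_{i,j}$ is $w$ with positions $i<j$ swapped, $\ell$ the number of inversions. $u\lessdot w$ iff $w=ut_{i,j}$, $i<j$, $\ell(w)=\ell(u)+1$; $u\lessdot_k w$ iff moreover $i\le k<j$. A $k$-chain is increasing if the smaller of the two values exchanged at each step strictly increases along the chain. $(w_1,\dots,w_d)$ is compatible with $(k_1,\dots,k_{d-1})$ if for each $s$ there is an increasing $k_s$-chain from $w_s$ to $w_{s+1}$ (unique when it exists). Flagged tableaux: staircase grid with a cell $(i,j)$ whenever $i+j\le n$, each cell of row $i$ empty or filled with an element of $[i]$. Reading word: scan rows top to bottom, each row right to left, writing $(i,n+1-c)$ for a cell in column $c$ filled with $i$. $T$ with reading word $(a_1,b_1),\dots,(a_d,b_d)$ is associated with $w$ if, with $v_0=w_0$ and $v_s=v_{s-1}t_{a_s,b_s}$, one has $v_s\lessdot v_{s-1}$ for all $s$ and $v_d=w$; $\mathrm{FT}(w)$ is the set of these. The map $\Psi$: let $C=(u_{n-1},\dots,u_0)$ be a chain from $u_{n-1}=w$ to $u_0=w_0$ compatible with $(n-1,\dots,1)$. For $k\in[n-1]$, write the increasing $k$-chain from $u_k$ to $u_{k-1}$ as $u_k=v_{d}\lessdot_k v_{d-1}\lessdot_k\cdots\lessdot_k v_0=u_{k-1}$ with $v_s=v_{s-1}t_{a_s,b_s}$,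 $a_s\le k<b_s$. Place the number $a_s$ in row $k$, column $n+1-b_s$, for each $s\in[d]$, leaving all other cells empty. The resulting flagged tableau is $\Psi(C)$. *)

(* Defs.v *)
From Stdlib Require Import ClassicalEpsilon.
From mathcomp Require Import all_boot.

Set Implicit Arguments.
Unset Strict Implicit.
Unset Printing Implicit Defensive.

(* Permutations of [n] in one-line notation: w = [:: w(1); ...; w(n)],
   a sequence of naturals that is a rearrangement of 1..n. *)
Definition is_perm (n : nat) (w : seq nat) : Prop := perm_eq w (iota 1 n).

Definition w0 (n : nat) : seq nat := rev (iota 1 n).

(* 1-based entry w(i) *)
Definition ent (w : seq nat) (i : nat) : nat := nth 0 w i.-1.

(* w t_{i,j}: w with positions i and j (1-based) swapped *)
Definition swap (w : seq nat) (i j : nat) : seq nat :=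
  [seq (if k == i then ent w j else if k == j then ent w i else ent w k)
  | k <- iota 1 (size w)].

Definition ninv (w : seq nat) : nat :=
  \sum_(p < size w) \sum_(q < size w | p < q) (nth 0 w q < nth 0 w p : nat).

Definition covers_by (u w : seq nat) (i j : nat) : Prop :=
  [/\ 1 <= i, i < j, j <= size u, w = swap u i j & ninv w = (ninv u).+1].

(* Increasing k-chain from u (bottom) to v (top), given by the list of
   transpositions (a,b) applied in order along the chain, starting at u.
   Each step x -> x t_{a,b} is a k-covering (a <= k < b), and the smaller
   exchanged value, which is x(a), strictly increases along the chain.
   [lo] is the previous smaller value (0 initially; all values are >= 1). *)
Fixpoint incr_kchain_aux (k : nat) (u v : seq nat) (lo : nat)
    (st : seq (nat * nat)) : Prop :=
  match st with
  | [::] => u = v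
  | (a, b) :: st' =>
      [/\ covers_by u (swap u a b) a b, a <= k < b, lo < ent u a
        & incr_kchain_aux k (swap u a b) v (ent u a) st']
  end.

Definition incr_kchain (k : nat) (u v : seq nat) (st : seq (nat * nat)) : Prop :=
  incr_kchain_aux k u v 0 st.

(* A chain C = (u_{n-1}, ..., u_0) is stored as the list
   [:: u_{n-1}; ...; u_0]; [uu n C k] is u_k. *)
Definition uu (n : nat) (C : seq (seq nat)) (k : nat) : seq nat :=
  nth [::] C (n.-1 - k).

Definition compat_chain (n : nat) (w : seq nat) (C : seq (seq nat)) : Prop :=
  [/\ size C = n, uu n C n.-1 = w, uu n C 0 = w0 n
    & forall k, 1 <= k <= n.-1 -> exists st, incr_kchain k (uu n C k) (uu n C k.-1) st].

(* Flagged tableaux: stored as the list of rows 1..n-1; row i is a list of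
   length n-i (columns 1..n-i), entry 0 = empty cell, otherwise an element of [i]. *)
Definition tableau := seq (seq nat).

Definition trow (T : tableau) (i : nat) : seq nat := nth [::] T i.-1.

Definition is_flagged (n : nat) (T : tableau) : Prop :=
  size T = n.-1 /\
  forall i, 1 <= i <= n.-1 ->
    size (trow T i) = n - i /\ all (fun x => x <= i) (trow T i).

(* Reading word: rows top to bottom, each row right to left; a cell in
   column c filled with a contributes (a, n+1-c). *)
Definition reading_word (n : nat) (T : tableau) : seq (nat * nat) :=
  flatten [seq [seq (nth 0 (trow T i) c.-1, n.+1 - c)
               | c <- rev (iota 1 (n - i)) & nth 0 (trow T i) c.-1 != 0]
          | i <- iota 1 n.-1].

Fixpoint assoc_from (v : seq nat) (word : seq (nat * nat)) (w : seq nat) : Prop :=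
  match word with
  | [::] => v = w
  | (a, b) :: word' => covers_by (swap v a b) v a b /\ assoc_from (swap v a b) word' w
  end.

Definition FT (n : nat) (w : seq nat) (T : tableau) : Prop :=
  is_flagged n T /\ assoc_from (w0 n) (reading_word n T) w.

(* The increasing k-chain from u_k to u_{k-1} (unique when it exists) *)
Definition kchain_steps (n : nat) (C : seq (seq nat)) (k : nat) : seq (nat * nat) :=
  epsilon (inhabits [::]) (fun st => incr_kchain k (uu n C k) (uu n C k.-1) st).

(* Row k of Psi(C): the cell in column c holds a_s if b_s = n+1-c for a step
   (a_s, b_s) of the increasing k-chain, and is empty (0) otherwise. *)
Definition Psi_row (n : nat) (C : seq (seq nat)) (k : nat) : seq nat :=
  let st := kchain_steps n C k in
  [seq nth 0 (map fst st) (index (n.+1 - c) (map snd st)) | c <- iota 1 (n - k)].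

Definition Psi (n : nat) (C : seq (seq nat)) : tableau :=
  [seq Psi_row n C k | k <- iota 1 n.-1].

(* Main.v *)
Require Import Defs.
From Stdlib Require Import ClassicalEpsilon.
From mathcomp Require Import all_boot zify.

Set Implicit Arguments.
Unset Strict Implicit.
Unset Printing Implicit Defensive.

Ltac fixsize := repeat match goal with
  | |- context [@size ?T ?x] => progress change (@size T x) with (@size nat x)
  | H : context [@size ?T ?x] |- _ => progress change (@size T x) with (@size nat x) in H
  end.
Ltac nlia := fixsize; lia.

Lemma size_swap u i j : size (swap u i j) = size u.
Proof. by rewrite /swap size_map size_iota. Qed.

Lemma ent_swap u i j p : 1 <= p <= size u ->
  ent (swap u i j) p =
  if p == i then ent u j else if p == j then ent u i else ent u p.
Proof.
move=> /andP[p1 ps]; rewrite /ent /swap (nth_map 0); last by rewrite size_iota; nlia.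
by rewrite nth_iota; [ have -> : 1 + p.-1 = p by nlia | nlia].
Qed.

Lemma ent_out u p : size u < p -> ent u p = 0.
Proof. move=> h; rewrite /ent nth_default //; nlia. Qed.

Lemma ent_swap_other u i j p : 1 <= p -> p != i -> p != j ->
  ent (swap u i j) p = ent u p.
Proof.
move=> p1 pi pj; case: (leqP p (size u)) => hp.
  by rewrite ent_swap ?p1 ?hp // (negPf pi) (negPf pj).
by rewrite !ent_out ?size_swap.
Qed.

Lemma ent_swapL u i j : 1 <= i <= size u -> ent (swap u i j) i = ent u j.
Proof. by move=> h; rewrite ent_swap // eqxx. Qed.

Lemma ent_swapR u i j : 1 <= j <= size u -> ent (swap u i j) j = ent u i.
Proof. by move=> h; rewrite ent_swap //; case: eqP => [-> //|_]; rewrite eqxx. Qed.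

Lemma eq_from_ent (u v : seq nat) : size u = size v ->
  (forall p, 1 <= p <= size u -> ent u p = ent v p) -> u = v.
Proof.
move=> hs h; apply: (eq_from_nth (x0:=0)) => // q hq.
have := h q.+1; rewrite /ent /=; apply; nlia.
Qed.

Lemma swapK u i j : 1 <= i <= size u -> 1 <= j <= size u ->
  swap (swap u i j) i j = u.
Proof.
move=> hi hj; apply: eq_from_ent; rewrite !size_swap // => p hp.
rewrite ent_swap ?size_swap //.
case: eqP => [->|pi]; first by rewrite ent_swapR.
case: eqP => [->|pj]; first by rewrite ent_swapL.
by rewrite ent_swap // (introF eqP pi) (introF eqP pj).
Qed.

Lemma swap_id u i j : ent u i = ent u j -> 1 <= i -> 1 <= j -> swap u i j = u.
Proof.
move=> e i1 j1; apply: eq_from_ent; rewrite ?size_swap // => p hp.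
rewrite ent_swap //; case: eqP => [->|_] //; case: eqP => [->|_] //.
Qed.

Lemma mem_ent u p : 1 <= p <= size u -> ent u p \in u.
Proof. move=> h; rewrite /ent mem_nth //; nlia. Qed.

Lemma ent_inj u p q : uniq u -> 1 <= p <= size u -> 1 <= q <= size u ->
  ent u p = ent u q -> p = q.
Proof.
move=> U hp hq; rewrite /ent => /eqP; rewrite nth_uniq //; nlia.
Qed.

Definition good n (u : seq nat) := [/\ size u = n, uniq u & 0 \notin u].

Lemma all_ent (P : nat -> Prop) u : (forall p, 1 <= p <= size u -> P (ent u p)) ->
  forall x, x \in u -> P x.
Proof.
move=> h x /(nthP 0) [i hi <-]; have := h i.+1; rewrite /ent /=; apply; nlia.
Qed.

Lemma good_swap n u i j : good n u -> 1 <= i <= n -> 1 <= j <= n ->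
  good n (swap u i j).
Proof.
case=> hs U z hi hj; split; first by rewrite size_swap.
- rewrite /swap map_inj_in_uniq ?iota_uniq // => p q.
  rewrite !mem_iota => hp hq.
  have F : forall r, 1 <= r < 1 + size u ->
     1 <= (if r == i then j else if r == j then i else r) <= size u.
    by move=> r hr; case: eqP => _; [nlia|case: eqP => _; nlia].
  have T : forall r, (if r == i then ent u j else if r == j then ent u i else ent u r) = ent u (if r == i then j else if r == j then i else r) by move=> r; case: (r == i); case: (r == j).
  rewrite !T => /(ent_inj U (F _ hp) (F _ hq)).
  by case: (@eqP _ p i) => ?; case: (@eqP _ p j) => ?; case: (@eqP _ q i) => ?; case: (@eqP _ q j) => ?; nlia.
- apply/negP => /(nthP 0) [p hp].
  have := @ent_swap u i j p.+1; rewrite /ent /= => ->; last by rewrite size_swap in hp; nlia.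
  move=> e; move: z; rewrite -e => /negP; apply.
  have G: forall r, 1 <= r <= size u -> nth 0 u r.-1 \in u by move=> r hr; rewrite mem_nth //; nlia.
  rewrite size_swap in hp.
  case: ifP => _; [apply: G; nlia | case: ifP => _; [apply: G; nlia | rewrite mem_nth //]].
Qed.

Lemma good_pos n u p : good n u -> 1 <= p <= n -> 0 < ent u p.
Proof.
case=> hs _ z hp; have := mem_ent (u:=u) (p:=p); rewrite hs => /(_ hp).
move=> h; rewrite lt0n; apply/negP => /eqP e; by rewrite -e h in z.
Qed.
Ltac ifs := repeat (match goal with |- context [@eq_op _ ?x ?y] =>
  lazymatch x with context [if _ then _ else _] => fail | _ =>
  lazymatch y with context [if _ then _ else _] => fail | _ =>
  case: (@eqP _ x y) => ? end end end; rewrite /=).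

Ltac ifs2 := repeat (match goal with |- context [@eq_op _ ?x ?y] =>
  lazymatch x with context [if _ then _ else _] => fail | _ =>
  lazymatch y with context [if _ then _ else _] => fail | _ =>
  let E := fresh "E" in
  case: (@eqP _ x y); intro E; rewrite ?E /=; revert E end end end); intros.

Section Key.
Variable N : nat.
Definition tau (A B k : 'I_N) : 'I_N :=
  if nat_of_ord k == nat_of_ord A then B else if nat_of_ord k == nat_of_ord B then A else k.

Lemma tau_val (A B k : 'I_N) : nat_of_ord (tau A B k) =
  if nat_of_ord k == nat_of_ord A then nat_of_ord B else if nat_of_ord k == nat_of_ord B then nat_of_ord A else nat_of_ord k.
Proof. by rewrite /tau; case: ifP => //; case: ifP. Qed.

Lemma tauK (A B : 'I_N) : nat_of_ord A != nat_of_ord B -> cancel (tau A B) (tau A B).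
Proof.
move=> ne k; apply: val_inj => /=; rewrite !tau_val.
move: ne; ifs; lia.
Qed.

Definition psi (A B : 'I_N) (x : 'I_N * 'I_N) :=
  if (x.1 < A) || (B < x.2) then (tau A B x.1, tau A B x.2) else x.

Lemma psiK (A B : 'I_N) : A < B -> cancel (psi A B) (psi A B).
Proof.
move=> AB [p q]; rewrite {2}/psi /=.
case: ifP => c /=; last by rewrite /psi /= c.
rewrite /psi /=.
have ne : nat_of_ord A != nat_of_ord B by rewrite neq_ltn AB.
have -> : (tau A B p < A) || (B < tau A B q).
  move: c; rewrite !tau_val; case: (@eqP _ (nat_of_ord p) (nat_of_ord A)) => ?; case: (@eqP _ (nat_of_ord p) (nat_of_ord B)) => ?; case: (@eqP _ (nat_of_ord q) (nat_of_ord A)) => ?; case: (@eqP _ (nat_of_ord q) (nat_of_ord B)) => ?; lia.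
by rewrite !tauK.
Qed.

Lemma psiP (A B : 'I_N) x : A < B -> ((psi A B x).1 < (psi A B x).2) = (x.1 < x.2).
Proof.
move=> AB; case: x => [p q]; rewrite /psi /=.
case: ifP => c //=; rewrite !tau_val.
by move: c; case: (@eqP _ (nat_of_ord p) (nat_of_ord A)) => ?; case: (@eqP _ (nat_of_ord p) (nat_of_ord B)) => ?; case: (@eqP _ (nat_of_ord q) (nat_of_ord A)) => ?; case: (@eqP _ (nat_of_ord q) (nat_of_ord B)) => ?; lia.
Qed.

Lemma sum_ind (a b : 'I_N) : a < b ->
  \sum_(x : 'I_N * 'I_N | x.1 < x.2) ((nat_of_ord x.1 == nat_of_ord a) && (nat_of_ord x.2 == nat_of_ord b) : nat) = 1.
Proof.
move=> ab; rewrite (bigD1 (a, b)) //= !eqxx big1 // => [[p q]] /andP[/= _ hx].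
apply/eqP; rewrite eqb0; apply/negP => /andP[/eqP e1 /eqP e2].
by move: hx; rewrite (val_inj e1) (val_inj e2) eqxx.
Qed.

Lemma key_ineq (u u' : seq nat) (A B C : 'I_N) (bt : bool) :
  (forall k : 'I_N, nth 0 u' k = nth 0 u (tau A B k)) -> A < B ->
  nth 0 u A < nth 0 u B ->
  (bt -> (A < C < B) && (nth 0 u A < nth 0 u C < nth 0 u B)) ->
  \sum_(x : 'I_N * 'I_N | x.1 < x.2) (nth 0 u x.2 < nth 0 u x.1) + 1 + (if bt then 2 else 0)
  <= \sum_(x : 'I_N * 'I_N | x.1 < x.2) (nth 0 u' x.2 < nth 0 u' x.1).
Proof.
move=> hu' AB uAB hbt.
have ne : nat_of_ord A != nat_of_ord B by rewrite neq_ltn AB.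
rewrite [X in _ <= X](reindex_inj (h:=psi A B)); last exact: can_inj (psiK AB).
rewrite [X in _ <= X](eq_bigl (fun x : 'I_N * 'I_N => x.1 < x.2)); last by move=> x; rewrite psiP.
pose g (x : 'I_N * 'I_N) : nat := ((nat_of_ord x.1 == nat_of_ord A) && (nat_of_ord x.2 == nat_of_ord B)) +
  (if bt then ((nat_of_ord x.1 == nat_of_ord A) && (nat_of_ord x.2 == nat_of_ord C)) + ((nat_of_ord x.1 == nat_of_ord C) && (nat_of_ord x.2 == nat_of_ord B)) else 0).
have -> : \sum_(x : 'I_N * 'I_N | x.1 < x.2) (nth 0 u x.2 < nth 0 u x.1) + 1 + (if bt then 2 else 0)
   = \sum_(x : 'I_N * 'I_N | x.1 < x.2) ((nth 0 u x.2 < nth 0 u x.1) + g x).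
  rewrite big_split /= -addnA; congr (_ + _).
  rewrite /g big_split /= sum_ind //; clear g; case: bt hbt => [/(_ isT)/andP[/andP[h1 h2] _]|_].
    by rewrite big_split /= !sum_ind.
  by rewrite big1.
apply: leq_sum => [[p q]] /= pq.
rewrite /psi /= /g /=; clear g.
case c: ((nat_of_ord p < nat_of_ord A) || (nat_of_ord B < nat_of_ord q)) => /=.
  rewrite !hu' !tauK //.
  case: bt hbt => [/(_ isT) /and3P[/andP[h1 h2] h3 h4]|_]; ifs2; lia.
rewrite !hu' !tau_val.
case: bt hbt => [/(_ isT) /and3P[/andP[h1 h2] h3 h4]|_]; ifs2; lia.
Qed.
End Key.

Lemma ninv_sumN N (u : seq nat) : size u = N ->
  ninv u = \sum_(x : 'I_N * 'I_N | x.1 < x.2) (nth 0 u x.2 < nth 0 u x.1).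
Proof. by move=> <-; rewrite /ninv pair_big_dep. Qed.

Lemma ninv_swap_ge u i j c (bt : bool) : 1 <= i -> i < j -> j <= size u ->
  ent u i < ent u j ->
  (bt -> (i < c < j) && (ent u i < ent u c < ent u j)) ->
  ninv u + 1 + (if bt then 2 else 0) <= ninv (swap u i j).
Proof.
move=> i1 ij js uij hbt.
have iN : i.-1 < size u by lia.
have jN : j.-1 < size u by lia.
pose A : 'I_(size u) := Ordinal iN.
pose B : 'I_(size u) := Ordinal jN.
pose C : 'I_(size u) := insubd A c.-1.
rewrite (ninv_sumN (erefl (size u))) (ninv_sumN (size_swap u i j)).
apply: (key_ineq (A:=A) (B:=B) (C:=C)) => //=.
- move=> k; have hk := ltn_ord k.
  have -> : nth 0 (swap u i j) k = ent (swap u i j) k.+1 by [].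
  rewrite ent_swap; last by lia.
  rewrite tau_val /= /ent; ifs2; try lia; move=> *; congr nth; lia.
- lia.
- case: bt hbt => // /(_ isT) /andP[h1 /andP[h2 h3]].
  have cN : c.-1 < size u by lia.
  have -> : nat_of_ord C = c.-1 by rewrite /C val_insubd cN.
  move: h2 h3; rewrite /ent; nlia.
Qed.

Lemma cover_props u i j : covers_by u (swap u i j) i j ->
  ent u i < ent u j /\ (forall c, i < c < j -> ~~ ((ent u i < ent u c) && (ent u c < ent u j))).
Proof.
case=> i1 ij js _ hn.
have lt : ent u i < ent u j.
  case: (ltngtP (ent u i) (ent u j)) => // h.
    have := @ninv_swap_ge (swap u i j) i j 0 false i1 ij ltac:(by rewrite size_swap)
      ltac:(by rewrite ent_swapL ?ent_swapR; lia) ltac:(by []).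
    rewrite swapK; [|lia|lia]; rewrite hn; lia.
  by move: hn; rewrite swap_id //; lia.
split => // c hc; apply/negP => hb.
have := @ninv_swap_ge u i j c true i1 ij js lt.
by rewrite hc hb => /(_ (fun _ => isT)); rewrite hn; lia.
Qed.

Definition dec_from k (v : seq nat) :=
  forall p q, k < p -> p < q -> q <= size v -> ent v q < ent v p.

Lemma dec_from_mono k k' v : k <= k' -> dec_from k v -> dec_from k' v.
Proof. move=> kk h p q kp pq qs; apply: h => //; nlia. Qed.

Lemma inv_dec k u a b : covers_by u (swap u a b) a b -> a <= k < b -> uniq u ->
  dec_from k (swap u a b) -> dec_from k u.
Proof.
move=> cov hk U hd; have [lt nb] := cover_props cov.
case: cov => a1 ab bs _ _.
have E : forall x, 1 <= x -> x != a -> x != b -> ent (swap u a b) x = ent u x.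
  by move=> x ??? ; rewrite ent_swap_other.
have Eb : ent (swap u a b) b = ent u a by rewrite ent_swapR //; nlia.
move=> p q kp pq qs.
have hd' := hd p q kp pq; rewrite size_swap in hd'; have {hd'} := hd' qs.
case: (@eqP _ p b) => pb.
  subst p; rewrite E ?Eb; try (apply/eqP; nlia); nlia.
case: (@eqP _ q b) => qb.
  subst q; rewrite Eb E; try (apply/eqP; nlia); try nlia.
  move=> h; have := nb p; rewrite h /= => /(_ ltac:(nlia)).
  rewrite -leqNgt leq_eqVlt => /orP[/eqP e|//].
  by have := ent_inj U (p:=b) (q:=p) ltac:(nlia) ltac:(nlia) e; nlia.
rewrite !E; try (apply/eqP; nlia); nlia.
Qed.

Definition apply_w (v : seq nat) (s : seq (nat * nat)) :=
  foldl (fun x p => swap x p.1 p.2) v s.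

Lemma assoc_apply v s w : assoc_from v s w -> w = apply_w v s.
Proof. by elim: s v => [|[a b] s IH] v /= ; [move=> ->|case=> _ /IH]. Qed.

Lemma assoc_cat v s1 s2 w :
  assoc_from v (s1 ++ s2) w <-> (exists m, assoc_from v s1 m /\ assoc_from m s2 w).
Proof.
elim: s1 v => [|[a b] s IH] v /=.
  by split; [exists v | case=> m [-> ]].
split.
  by case=> c /IH [m [h1 h2]]; exists m.
by case=> m [[c h1] h2]; split => //; apply/IH; exists m.
Qed.

Lemma assoc_rcons v s a b w :
  assoc_from v (rcons s (a, b)) w <->
  (exists m, assoc_from v s m /\ covers_by (swap m a b) m a b /\ w = swap m a b).
Proof.
rewrite -cats1 assoc_cat; split.
  by case=> m [h1 [h2 h3]]; exists m.
by case=> m [h1 [h2 h3]]; exists m; split => //=; split.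
Qed.

Lemma bu_chain n k st : forall u v lo, incr_kchain_aux k u v lo st ->
  good n v -> dec_from k v ->
  [/\ good n u, dec_from k u, sorted (fun x y => y < x) (map snd st),
      (forall p, p \in st -> 1 <= p.1 <= k /\ k < p.2 <= n)
    & assoc_from v (rev st) u].
Proof.
elim: st => [|[a b] st IH] u v lo /=.
  by move=> -> gv dv; split.
case=> cov hk hlo rest gv dv.
have [gu' du' so ra asc] := IH _ _ _ rest gv dv.
have [a1 ab bs _ _] := cov.
case: gu' => [s' U' z']; rewrite size_swap in s'.
have ek : u = swap (swap u a b) a b by rewrite swapK //; nlia.
have gu : good n u by rewrite ek; apply: good_swap; [split => //; rewrite size_swap | nlia | nlia].
have du : dec_from k u by apply: (inv_dec cov hk); case: gu.
split => //.
- clear IH ra asc; case: st rest so => [//|[a2 b2] st] /= [cov2 hk2 hlo2 _] ->; rewrite andbT.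
  have [lt2 _] := cover_props cov2.
  have [_ _ bs2 _ _] := cov2.
  have eb : ent (swap u a b) b = ent u a by rewrite ent_swapR //; nlia.
  rewrite size_swap in bs2.
  case: (ltngtP b2 b) => // h.
    have := du' b b2 ltac:(nlia) h; rewrite size_swap => /(_ bs2); nlia.
  by subst b2; nlia.
- move=> p; rewrite in_cons => /orP[/eqP -> /=|/ra //]; nlia.
- rewrite rev_cons; apply/assoc_rcons; exists (swap u a b); split => //.
  by rewrite -ek.
Qed.

Definition last_lo (lo : nat) (st : seq (nat * nat)) (m : seq nat) :=
  if st is [::] then lo else ent m (last (0, 0) st).2.

Lemma kchain_rcons k a b st : forall u m lo, incr_kchain_aux k u m lo st ->
  covers_by m (swap m a b) a b -> a <= k < b -> last_lo lo st m < ent m a ->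
  incr_kchain_aux k u (swap m a b) lo (rcons st (a, b)).
Proof.
elim: st => [|[a1 b1] st IH] u m lo /=.
  by move=> -> cov hk hlo; split.
case=> cov1 hk1 hlo1 rest cov hk hlo; split => //.
apply: IH => //.
case: st rest hlo => [|y s] /=; last by [].
move=> <-.
have [_ _ bs _ _] := cov1.
by rewrite ent_swapR //; nlia.
Qed.

Lemma td_chain n k seg : forall v u, assoc_from v seg u -> good n v -> dec_from k v ->
  (forall p, p \in seg -> 1 <= p.1 <= k /\ k < p.2) -> sorted ltn (map snd seg) ->
  [/\ incr_kchain_aux k u v 0 (rev seg), good n u & dec_from k u].
Proof.
elim: seg => [|[a b] seg IH] v u /=.
  by move=> -> gv dv _ _; split.
case=> cov rest gv dv ra so.
set x := swap v a b in cov rest.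
have [a1 ab bs e _] := cov.
have gx : good n x.
  apply: good_swap => //; case: gv => sv _ _; rewrite size_swap in bs; nlia.
have cov' : covers_by x (swap x a b) a b by rewrite -e.
have hk : a <= k < b by have := ra (a, b); rewrite in_cons eqxx /= => /(_ isT); nlia.
have dx : dec_from k x by apply: (inv_dec cov' hk); [case: gx | rewrite -e].
have [ch gu du] := IH x u rest gx dx
  (fun p hp => ra p ltac:(by rewrite in_cons hp orbT)) (path_sorted so).
split => //.
rewrite rev_cons e; apply: kchain_rcons => //.
clear ch IH; case: seg rest so ra => [|[a2 b2] s] /=.
  move=> _ _ _; apply: (good_pos gx); case: (gx) => sx _ _; nlia.
case=> cov2 _ /andP[bb2 _] ra.
rewrite /last_lo rev_cons.
case E: (rcons (rev s) (a2, b2)) => [|y t]; first by move: (size_rcons (rev s) (a2,b2)); rewrite E.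
have L : last y t = (a2, b2) by rewrite -[last y t]/(last (0,0) (y::t)) -E last_rcons.
rewrite /= L /=.
have [_ _ bs2 _ _] := cov2.
rewrite size_swap in bs2.
case: gx => sx Ux zx.
have hk2 : k < b2 by have := ra (a2, b2); rewrite !in_cons eqxx orbT /= => /(_ isT); nlia.
rewrite size_swap in bs; rewrite ent_swapL; last by nlia.
rewrite ent_swap_other; try (apply/eqP; nlia); try nlia.
have := dv b b2; case: gv => sv _ _; rewrite sv => /(_ ltac:(nlia) bb2 ltac:(nlia)); nlia.
Qed.

Lemma untouched k st : forall u v lo, incr_kchain_aux k u v lo st ->
  forall p, k < p -> p \notin map snd st -> ent v p = ent u p.
Proof.
elim: st => [|[a b] st IH] u v lo /=; first by move=> -> .
case=> cov hk _ rest p kp; rewrite in_cons negb_or => /andP[pb pn].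
rewrite (IH _ _ _ rest p kp pn) ent_swap_other //; nlia.
Qed.

Lemma gtn_trans : transitive (fun x y : nat => y < x).
Proof. move=> x y z h1 h2; exact: ltn_trans h2 h1. Qed.

Lemma mem_chain n k st : forall u v lo, incr_kchain_aux k u v lo st ->
  good n v -> dec_from k v ->
  forall p, k < p -> (p \in map snd st) = (ent u p != ent v p).
Proof.
elim: st => [|[a b] st IH] u v lo.
  by move=> /= -> _ _ p _; rewrite eqxx.
move=> ch gv dv p kp.
have [_ _ so _ _] := bu_chain ch gv dv.
move: ch => /= [cov hk _ rest].
have bn : b \notin map snd st.
  apply/negP => hb; have := order_path_min gtn_trans so.
  by move/allP/(_ b hb); rewrite ltnn.
rewrite in_cons (IH _ _ _ rest gv dv p kp).
have [lt _] := cover_props cov.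
have [a1 ab bs _ _] := cov.
case: (@eqP _ p b) => [->|pb] /=.
  rewrite (untouched rest); [|nlia|done].
  rewrite ent_swapR; last by nlia.
  by move: lt; nlia.
rewrite ent_swap_other //; try nlia; apply/eqP; nlia.
Qed.

Lemma uniq_chain n k st1 : forall u lo1 st2 lo2 v,
  incr_kchain_aux k u v lo1 st1 -> incr_kchain_aux k u v lo2 st2 ->
  good n v -> dec_from k v -> st1 = st2.
Proof.
elim: st1 => [|[a b] t1 IH] u lo1 st2 lo2 v.
  move=> /= e ch2 gv dv; case: st2 ch2 => [//|[a' b'] t2] ch2.
  have := mem_chain ch2 gv dv (p:=b'); rewrite in_cons eqxx e eqxx /=.
  by move: ch2 => /= [_ hk _ _] /(_ ltac:(nlia)).
move=> ch1 ch2 gv dv.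
case: st2 ch2 => [|[a' b'] t2] ch2.
  have := mem_chain ch1 gv dv (p:=b); rewrite in_cons eqxx.
  by move: ch2 ch1 => /= -> [_ hk _ _]; rewrite eqxx => /(_ ltac:(nlia)).
have [gu du so1 ra1 _] := bu_chain ch1 gv dv.
have [_ _ so2 ra2 _] := bu_chain ch2 gv dv.
have es : map snd ((a, b) :: t1) = map snd ((a', b') :: t2).
  apply: (irr_sorted_eq gtn_trans) => //; first by move=> x; rewrite ltnn.
  move=> p; case: (ltnP k p) => kp.
    by rewrite (mem_chain ch1 gv dv kp) (mem_chain ch2 gv dv kp).
  have F : forall s, (forall q, q \in s -> 1 <= q.1 <= k /\ k < q.2 <= n) ->
      p \notin map snd s.
    move=> s hs; apply/mapP => [[[x y] /hs /= [_ hq] /= e]]; subst p; nlia.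
  by rewrite (negPf (F _ ra1)) (negPf (F _ ra2)).
case: es => eb et; subst b'.
move: ch1 ch2 => /= [cov1 hk1 _ rest1] [cov2 hk2 _ rest2].
have bn : forall t, sorted (fun x y => y < x) (map snd ((a, b) :: t)) -> b \notin map snd t.
  move=> t so; apply/negP => hb; have := order_path_min gtn_trans so.
  by move/allP/(_ b hb); rewrite ltnn.
have e1 := untouched rest1 (p:=b) ltac:(nlia) (bn _ so1).
have e2 := untouched rest2 (p:=b) ltac:(nlia) (bn _ so2).
have [a1 ab bs _ _] := cov1.
have [a1' ab' bs' _ _] := cov2.
rewrite ent_swapR in e1; last by nlia.
rewrite ent_swapR in e2; last by nlia.
case: gu => su Uu _.
have ea : a = a' by apply: (ent_inj Uu); [nlia | nlia | rewrite -e1 -e2].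
subst a'; congr cons; exact: IH rest1 rest2 gv dv.
Qed.

Definition a_of (st : seq (nat * nat)) b := nth 0 (map fst st) (index b (map snd st)).
Definition prow n k st := [seq a_of st (n.+1 - c) | c <- iota 1 (n - k)].
Definition rread n k (r : seq nat) :=
  [seq (nth 0 r c.-1, n.+1 - c) | c <- rev (iota 1 (n - k)) & nth 0 r c.-1 != 0].

Lemma Psi_rowE n C k : Psi_row n C k = prow n k (kchain_steps n C k).
Proof. by []. Qed.

Lemma reading_wordE n T :
  reading_word n T = flatten [seq rread n i (trow T i) | i <- iota 1 n.-1].
Proof. by []. Qed.

Lemma rev_iota_b n k : k <= n ->
  rev (iota 1 (n - k)) = map (fun b => n.+1 - b) (iota k.+1 (n - k)).
Proof.
move=> kn; apply: (eq_from_nth (x0:=0)); first by rewrite size_rev size_map !size_iota.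
rewrite size_rev size_iota => i hi.
rewrite nth_rev ?size_iota // (nth_map 0) ?size_iota // !nth_iota; nlia.
Qed.

Lemma rread_b n k r : k <= n -> rread n k r =
  [seq (nth 0 r (n - b), b) | b <- iota k.+1 (n - k) & nth 0 r (n - b) != 0].
Proof.
move=> kn; rewrite /rread rev_iota_b // filter_map -map_comp.
rewrite (@eq_in_filter _ _ (fun b => nth 0 r (n - b) != 0)); last first.
  by move=> b; rewrite mem_iota => hb /=; have -> : (n.+1 - b).-1 = n - b by nlia.
apply/eq_in_map => b; rewrite mem_filter mem_iota => /andP[_ hb] /=.
have -> : (n.+1 - b).-1 = n - b by nlia.
congr pair; nlia.
Qed.

Lemma a_of_mem st p : uniq (map snd st) -> p \in st -> a_of st p.2 = p.1.
Proof.
move=> U /(nthP (0, 0)) [i hi <-]; rewrite /a_of.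
rewrite -(nth_map (0,0) 0 snd hi) index_uniq ?size_map //.
by rewrite (nth_map (0,0)).
Qed.

Lemma a_of_notin st b : b \notin map snd st -> a_of st b = 0.
Proof. by move=> h; rewrite /a_of memNindex // nth_default // !size_map. Qed.

Lemma a_of_cases st b : a_of st b = 0 \/ exists2 p, p \in st & a_of st b = p.1.
Proof.
case: (boolP (b \in map snd st)) => h; last by left; rewrite a_of_notin.
right; exists (nth (0,0) st (index b (map snd st))).
  by rewrite mem_nth // -(size_map snd) index_mem.
by rewrite /a_of (nth_map (0,0)) // -(size_map snd) index_mem.
Qed.

Lemma size_prow n k st : size (prow n k st) = n - k.
Proof. by rewrite size_map size_iota. Qed.

Lemma prow_all n k st : (forall p, p \in st -> p.1 <= k) -> all (fun x => x <= k) (prow n k st).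
Proof.
move=> h; apply/allP => x /mapP [c _ ->].
by case: (a_of_cases st (n.+1 - c)) => [->|[p /h hp ->]].
Qed.

Lemma rread_prow n k st : k <= n -> sorted (fun x y => y < x) (map snd st) ->
  (forall p, p \in st -> 1 <= p.1 /\ k < p.2 <= n) -> rread n k (prow n k st) = rev st.
Proof.
move=> kn so hr; rewrite rread_b //.
have U : uniq (map snd st).
  by apply: (sorted_uniq gtn_trans) => // x; rewrite /= ltnn.
have E : forall b, b \in iota k.+1 (n - k) -> nth 0 (prow n k st) (n - b) = a_of st b.
  move=> b; rewrite mem_iota => hb.
  rewrite (nth_map 0) ?size_iota; last by nlia.
  by rewrite nth_iota; [congr a_of; nlia | nlia].
rewrite (@eq_in_filter _ _ (fun b => b \in map snd st)); last first.
  move=> b hb; rewrite E //.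
  case: (boolP (b \in map snd st)) => h; last by rewrite a_of_notin.
  move: h => /mapP [p hp ->]; rewrite a_of_mem //; have := hr p hp; nlia.
have F : [seq b <- iota k.+1 (n - k) | b \in map snd st] = map snd (rev st).
  apply: (irr_sorted_eq ltn_trans) => //.
  - by move=> x; rewrite ltnn.
  - apply: sorted_filter; [exact: ltn_trans | exact: iota_ltn_sorted].
  - by rewrite map_rev rev_sorted.
  move=> b; rewrite mem_filter map_rev mem_rev andb_idr // => /mapP [[x y] hp ->].
  by rewrite mem_iota; have := hr _ hp => /=; nlia.
rewrite (_ : map _ _ = map (fun b => (a_of st b, b)) [seq b <- iota k.+1 (n - k) | b \in map snd st]); last first.
  apply/eq_in_map; by move=> b; rewrite mem_filter => /andP[_ hb]; rewrite E.
rewrite F -map_comp map_id_in // => p; rewrite mem_rev => hp /=.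
by rewrite a_of_mem //; case: p hp.
Qed.

Lemma map_snd_rread n k r : k <= n ->
  map snd (rread n k r) = [seq b <- iota k.+1 (n - k) | nth 0 r (n - b) != 0].
Proof. by move=> kn; rewrite rread_b // -map_comp map_id. Qed.

Lemma prow_rread n k r : k <= n -> size r = n - k -> prow n k (rev (rread n k r)) = r.
Proof.
move=> kn sr; set st := rev (rread n k r).
have ms : forall b, (b \in map snd st) = (b \in iota k.+1 (n - k)) && (nth 0 r (n - b) != 0).
  by move=> b; rewrite /st map_rev mem_rev map_snd_rread // mem_filter andbC.
have U : uniq (map snd st).
  by rewrite /st map_rev rev_uniq map_snd_rread // filter_uniq // iota_uniq.
apply: (eq_from_nth (x0:=0)); first by rewrite size_prow sr.
rewrite size_prow => i hi.
rewrite (nth_map 0) ?size_iota // nth_iota //.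
have -> : n.+1 - (1 + i) = n - i by nlia.
case: (boolP (nth 0 r i != 0)) => h.
  have hp : (nth 0 r i, n - i) \in st.
    rewrite /st mem_rev rread_b //; apply/mapP; exists (n - i).
      rewrite mem_filter mem_iota; have -> : n - (n - i) = i by nlia.
      rewrite h /=; nlia.
    by have -> : n - (n - i) = i by nlia.
  exact: (a_of_mem U hp).
rewrite a_of_notin; first by move: h; rewrite negbK => /eqP.
rewrite ms; have -> : n - (n - i) = i by nlia.
by move: h; rewrite negbK => ->; rewrite andbF.
Qed.

Lemma rread_props n k r : k <= n -> size r = n - k -> all (fun x => x <= k) r ->
  (forall p, p \in rread n k r -> 1 <= p.1 <= k /\ k < p.2 <= n) /\
  sorted ltn (map snd (rread n k r)).
Proof.
move=> kn sr ar; split; last first.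
  by rewrite map_snd_rread //; apply: sorted_filter; [exact: ltn_trans | exact: iota_ltn_sorted].
move=> p; rewrite rread_b // => /mapP [b]; rewrite mem_filter mem_iota => /andP[nz hb] -> /=.
have : nth 0 r (n - b) <= k.
  by move/allP: ar; apply; rewrite mem_nth // sr; nlia.
move: nz; nlia.
Qed.

Lemma good_w0 n : good n (w0 n).
Proof.
split; first by rewrite size_rev size_iota.
  by rewrite rev_uniq iota_uniq.
by rewrite mem_rev mem_iota.
Qed.

Lemma ent_w0 n p : 1 <= p <= n -> ent (w0 n) p = n.+1 - p.
Proof.
move=> hp; rewrite /ent /w0 nth_rev ?size_iota; last by nlia.
rewrite nth_iota; nlia.
Qed.

Lemma dec_w0 n : dec_from 0 (w0 n).
Proof.
move=> p q p0 pq; rewrite size_rev size_iota => qn.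
rewrite !ent_w0; nlia.
Qed.

Lemma trow_map (f : nat -> seq nat) m i : 1 <= i <= m ->
  trow [seq f k | k <- iota 1 m] i = f i.
Proof.
move=> hi; rewrite /trow (nth_map 0) ?size_iota; last by nlia.
rewrite nth_iota; [congr f | ]; nlia.
Qed.

Lemma assoc_rows (f : nat -> seq (nat * nat)) (u : nat -> seq nat) m : forall k,
  (forall j, k < j <= k + m -> assoc_from (u j.-1) (f j) (u j)) ->
  assoc_from (u k) (flatten [seq f j | j <- iota k.+1 m]) (u (k + m)).
Proof.
elim: m => [|m IH] k h /=; first by rewrite addn0.
apply/assoc_cat; exists (u k.+1); split.
  by apply: (h k.+1); nlia.
rewrite -addSnnS; apply: IH => j hj; apply: h; nlia.
Qed.

Lemma apply_w_cat v s1 s2 : apply_w v (s1 ++ s2) = apply_w (apply_w v s1) s2.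
Proof. by rewrite /apply_w foldl_cat. Qed.

Lemma chain_facts n w C : compat_chain n w C ->
  (forall k, 1 <= k <= n.-1 -> incr_kchain k (uu n C k) (uu n C k.-1) (kchain_steps n C k)) /\
  (forall k, k <= n.-1 -> good n (uu n C k) /\ dec_from k (uu n C k)).
Proof.
case=> sC top bot ex.
have ch : forall k, 1 <= k <= n.-1 ->
    incr_kchain k (uu n C k) (uu n C k.-1) (kchain_steps n C k).
  by move=> k hk; rewrite /kchain_steps; apply: epsilon_spec; apply: ex.
split => //.
elim=> [|k IH] hk; first by rewrite bot; split; [exact: good_w0 | exact: dec_w0].
have [g d] := IH ltac:(nlia).
have := @bu_chain n k.+1 _ _ _ _ (ch k.+1 ltac:(nlia)) g (dec_from_mono (leqnSn k) d).
by case.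
Qed.

Lemma part1 n w C : 0 < n -> compat_chain n w C -> FT n w (Psi n C).
Proof.
move=> n0 cC; have [ch inv] := chain_facts cC.
case: cC => sC top bot _.
have R : forall k, 1 <= k <= n.-1 ->
  [/\ sorted (fun x y => y < x) (map snd (kchain_steps n C k)),
      (forall p, p \in kchain_steps n C k -> 1 <= p.1 <= k /\ k < p.2 <= n)
    & assoc_from (uu n C k.-1) (rev (kchain_steps n C k)) (uu n C k)].
  move=> k hk; have [g d] := inv k.-1 ltac:(nlia).
  have d' : dec_from k (uu n C k.-1) by apply: dec_from_mono d; nlia.
  by have [] := bu_chain (ch k hk) g d'.
split.
  split; first by rewrite size_map size_iota.
  move=> i hi; rewrite /Psi trow_map // Psi_rowE size_prow; split => //.
  have [_ ra _] := R i hi; apply: prow_all => p /ra; case: p => x y /=; nlia.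
rewrite reading_wordE.
rewrite (_ : map _ _ = [seq rev (kchain_steps n C i) | i <- iota 1 n.-1]); last first.
  apply/eq_in_map => i; rewrite mem_iota => hi.
  have [so ra _] := R i ltac:(nlia).
  rewrite /Psi trow_map; last by nlia.
  rewrite Psi_rowE rread_prow //; first by nlia.
  by move=> p /ra; case: p => x y /=; nlia.
have := @assoc_rows (fun i => rev (kchain_steps n C i)) (uu n C) n.-1 0.
rewrite add0n bot top; apply => j hj.
by have [] := R j ltac:(nlia).
Qed.

Lemma part2 n w C1 C2 : 0 < n -> compat_chain n w C1 -> compat_chain n w C2 ->
  Psi n C1 = Psi n C2 -> C1 = C2.
Proof.
move=> n0 c1 c2 eP.
have [ch1 inv1] := chain_facts c1.
have [ch2 inv2] := chain_facts c2.
case: (c1) => s1 _ b1 _; case: (c2) => s2 _ b2 _.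
have rowE : forall C, compat_chain n w C -> forall k, 1 <= k <= n.-1 ->
    uu n C k = apply_w (uu n C k.-1) (rread n k (trow (Psi n C) k)).
  move=> C cC k hk; have [ch inv] := chain_facts cC.
  have [g d] := inv k.-1 ltac:(nlia).
  have d' : dec_from k (uu n C k.-1) by apply: dec_from_mono d; nlia.
  have [_ _ so ra asc] := bu_chain (ch k hk) g d'.
  rewrite /Psi trow_map; last by nlia.
  rewrite Psi_rowE rread_prow //; first exact: assoc_apply.
    by nlia.
  by move=> p /ra; case: p => x y /=; nlia.
have E : forall k, k <= n.-1 -> uu n C1 k = uu n C2 k.
  elim=> [|k IH] hk; first by rewrite b1 b2.
  by rewrite (rowE C1 c1 k.+1) ?(rowE C2 c2 k.+1) //= ?IH ?eP //; nlia.
apply: (eq_from_nth (x0:=[::])); first by rewrite s1 s2.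
rewrite s1 => i hi.
have := E (n.-1 - i) ltac:(nlia); rewrite /uu.
by have -> : n.-1 - (n.-1 - i) = i by nlia.
Qed.

Lemma part3 n w T : 0 < n -> FT n w T -> exists C, compat_chain n w C /\ Psi n C = T.
Proof.
move=> n0 [[sT rows] asc].
pose R i := rread n i (trow T i).
pose U k := apply_w (w0 n) (flatten [seq R i | i <- iota 1 k]).
have U0 : U 0 = w0 n by [].
have US : forall k, U k.+1 = apply_w (U k) (R k.+1).
  move=> k; rewrite /U.
  have -> : iota 1 k.+1 = iota 1 k ++ [:: k.+1] by have := iotaD 1 k 1; rewrite addn1 add1n.
  by rewrite map_cat flatten_cat apply_w_cat /= cats0.
have Rp : forall k, 1 <= k <= n.-1 ->
    (forall p, p \in R k -> 1 <= p.1 <= k /\ k < p.2 <= n) /\ sorted ltn (map snd (R k)).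
  move=> k hk; have [sr ar] := rows k hk; apply: rread_props => //; nlia.
pose P k := [/\ good n (U k), dec_from k (U k)
   & assoc_from (U k) (flatten [seq R i | i <- iota k.+1 (n.-1 - k)]) w].
have step : forall k, k < n.-1 -> P k ->
    P k.+1 /\ incr_kchain k.+1 (U k.+1) (U k) (rev (R k.+1)).
  move=> k hk [g d a].
  have e : n.-1 - k = (n.-1 - k.+1).+1 by nlia.
  move: a; rewrite e /= => /assoc_cat [m [a1 a2]].
  have em : m = U k.+1 by rewrite US; exact: assoc_apply a1.
  subst m.
  have [ra so] := Rp k.+1 ltac:(nlia).
  have [c gu du] := td_chain a1 g (dec_from_mono (leqnSn k) d)
     (fun p hp => ltac:(have := ra p hp; case: p hp => x y _ /=; nlia)) so.
  by split.
have PK : forall k, k <= n.-1 -> P k.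
  elim=> [|k IH] hk.
    split; [exact: good_w0 | exact: dec_w0 |].
    by rewrite subn0; exact: asc.
  by have [] := step k ltac:(nlia) (IH ltac:(nlia)).
pose C := [seq U (n.-1 - j) | j <- iota 0 n].
have uuC : forall k, k <= n.-1 -> uu n C k = U k.
  move=> k hk; rewrite /uu /C (nth_map 0) ?size_iota; last by nlia.
  rewrite nth_iota; last by nlia.
  by have -> : n.-1 - (0 + (n.-1 - k)) = k by nlia.
have chC : forall k, 1 <= k <= n.-1 -> incr_kchain k (U k) (U k.-1) (rev (R k)).
  move=> k hk; have [_ c] := step k.-1 ltac:(nlia) (PK k.-1 ltac:(nlia)).
  have e : k.-1.+1 = k by nlia.
  by rewrite e in c.
exists C; split.
  split.
  - by rewrite size_map size_iota.
  - rewrite uuC //; have [_ _ a] := PK n.-1 (leqnn _).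
    by rewrite subnn /= in a.
  - by rewrite uuC.
  - move=> k hk; exists (rev (R k)); rewrite !uuC; [exact: chC | nlia | nlia].
apply: (eq_from_nth (x0:=[::])).
  by rewrite size_map size_iota sT.
rewrite size_map size_iota => i hi.
rewrite /Psi (nth_map 0) ?size_iota // nth_iota // Psi_rowE add1n.
have -> : nth [::] T i = trow T i.+1 by [].
have ek : kchain_steps n C i.+1 = rev (R i.+1).
  have hk : 1 <= i.+1 <= n.-1 by nlia.
  have [g d _] := PK i ltac:(nlia).
  have c1 : incr_kchain i.+1 (uu n C i.+1) (uu n C i) (kchain_steps n C i.+1).
    rewrite /kchain_steps; apply: epsilon_spec; exists (rev (R i.+1)).
    by rewrite !uuC; [exact: chC | nlia | nlia].
  rewrite !uuC in c1; try nlia.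
  exact: (uniq_chain (n:=n) c1 (chC _ hk) g (dec_from_mono (leqnSn i) d)).
rewrite ek prow_rread //; first by nlia.
by have [] := rows i.+1 ltac:(nlia).
Qed.

Theorem lemma4p12 (n : nat) (w : seq nat) :
  0 < n -> is_perm n w ->
  [/\ (forall C, compat_chain n w C -> FT n w (Psi n C)),
      (forall C1 C2, compat_chain n w C1 -> compat_chain n w C2 ->
         Psi n C1 = Psi n C2 -> C1 = C2)
    & (forall T, FT n w T -> exists C, compat_chain n w C /\ Psi n C = T)].
Proof.
move=> n0 _; split.
- by move=> C; apply: part1.
- by move=> C1 C2; apply: part2.
- by move=> T; apply: part3.
Qed.
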